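(* Let $(X,Y)$ be a random pair with $X\in\mathbb{R}^p$, $Y\in\mathbb{R}^q$ and $(X_1,Y_1),\ldots,(X_4,Y_4)$ i.i.d. copies of it. If $\mathbb{E}[|X|^2]<\infty$, $\mathbb{E}[|Y|^2]<\infty$ and $\mathbb{E}[|X|^2|Y|^2]<\infty$, then $\mathrm{Var}(h_4)<\infty$, where $h_4=h_4((X_1,Y_1),\ldots,(X_4,Y_4))$. Consequently $\mathrm{Var}(h_1)<\infty$ and $\mathrm{Var}(h_2)<\infty$.
   Context: $|\cdot|$ Euclidean norm. The kernel $h_4$ is $$h_4((X_1,Y_1),\ldots,(X_4,Y_4))=\frac14\sum_{1\le i,j\le4,i\ne j}|X_i-X_j||Y_i-Y_j|-\frac14\sum_{i=1}^4\Big(\sum_{j\ne i}|X_i-X_j|\Big)\Big(\sum_{j\ne i}|Y_i-Y_j|\Big)+\frac1{24}\Big(\sum_{i\ne j}|X_i-X_j|\Big)\Big(\sum_{i\ne j}|Y_i-Y_j|\Big).$$ $h_1((X_1,Y_1))=\mathbb{E}_{2,3,4}[h_4]$ (expectation over $(X_2,Y_2),(X_3,Y_3),(X_4,Y_4)$) and $h_2((X_1,Y_1),(X_2,Y_2))=\mathbb{E}_{3,4}[h_4]$ (expectation over $(X_3,Y_3),(X_4,Y_4)$). *)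

(* Defs.v *)
From HB Require Import structures.
From mathcomp Require Import all_boot all_order all_algebra.
From mathcomp Require Import all_classical all_reals all_analysis.
Set Implicit Arguments. Unset Strict Implicit. Unset Printing Implicit Defensive.
Import Order.TTheory GRing.Theory Num.Theory.
Local Open Scope ring_scope.
Local Open Scope classical_set_scope.

Definition eucl (R : realType) (n : nat) (v : 'rV[R]_n) : R :=
  Num.sqrt (\sum_(i < n) v ord0 i ^+ 2).

Definition h4 (R : realType) (p q : nat) (X : 'I_4 -> 'rV[R]_p) (Y : 'I_4 -> 'rV[R]_q) : R :=
  let a i j := eucl (X i - X j) in
  let b i j := eucl (Y i - Y j) in
  4^-1 * (\sum_(i < 4) \sum_(j < 4 | i != j) a i j * b i j)
  - 4^-1 * (\sum_(i < 4) ((\sum_(j < 4 | j != i) a i j) * (\sum_(j < 4 | j != i) b i j)))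
  + 24^-1 * ((\sum_(i < 4) \sum_(j < 4 | i != j) a i j)
             * (\sum_(i < 4) \sum_(j < 4 | i != j) b i j)).

Definition pt4 (T : Type) (t1 t2 t3 t4 : T) (i : 'I_4) : T :=
  match val i with 0 => t1 | 1 => t2 | 2 => t3 | _ => t4 end.

Section kernels.
Context (R : realType) (d : measure_display) (T : measurableType d)
  (P : probability T R) (p q : nat) (X : T -> 'rV[R]_p) (Y : T -> 'rV[R]_q).

(* h_4 as a function of four independent samples (canonical product model) *)
Definition H4 (w : T * T * T * T) : R :=
  let t := pt4 w.1.1.1 w.1.1.2 w.1.2 w.2 in
  h4 (fun i => X (t i)) (fun i => Y (t i)).

Definition H1 (t1 : T) : R :=
  fine (\int[(P \x P \x P)%E]_w (H4 (t1, w.1.1, w.1.2, w.2))%:E)%E.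

Definition H2 (t12 : T * T) : R :=
  fine (\int[(P \x P)%E]_w (H4 (t12.1, t12.2, w.1, w.2))%:E)%E.
End kernels.

Definition finite_variance (R : realType) (d : measure_display) (T : measurableType d)
  (mu : probability T R) (f : T -> R) : Prop :=
  mu.-integrable setT (EFin \o f) /\
  (\int[mu]_x ((f x - fine (\int[mu]_y (f y)%:E)%E) ^+ 2)%:E < +oo)%E.

(* Main.v *)
Require Import Defs.
From HB Require Import structures.
From mathcomp Require Import all_boot all_order all_algebra.
From mathcomp Require Import all_classical all_reals all_analysis.
From mathcomp Require Import measurable_realfun.
From mathcomp Require Import ring lra.
Set Implicit Arguments. Unset Strict Implicit. Unset Printing Implicit Defensive.
Import Order.TTheory GRing.Theory Num.Theory.
Local Open Scope ring_scope.
Local Open Scope classical_set_scope.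

Notation mfunD := measurable_realfun.measurable_funD.
Notation mfunM := measurable_realfun.measurable_funM.
Notation mfunB := measurable_realfun.measurable_funB.

Section Fin.
Context (R : realType).

Definition Fin d (T : measurableType d) (mu : {measure set T -> \bar R}) (f : T -> R) :=
  [/\ measurable_fun setT f, (forall x, 0 <= f x) & (\int[mu]_x (f x)%:E < +oo)%E].

Lemma Fin_cst d (T : measurableType d) (mu : probability T R) (c : R) :
  0 <= c -> Fin mu (fun _ => c).
Proof.
move=> c0; split. exact: measurable_cst. by []. idtac.
by rewrite integral_cst //= probability_setT mule1 ltry.
Qed.

Lemma Fin_add d (T : measurableType d) (mu : {measure set T -> \bar R}) (f g : T -> R) :
  Fin mu f -> Fin mu g -> Fin mu (fun x => f x + g x).
Proof.
move=> [mf f0 fi] [mg g0 gi]; split.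
- exact: mfunD.
- by move=> x; rewrite addr_ge0.
- under eq_integral do rewrite EFinD.
  rewrite ge0_integralD //; first by rewrite lte_add_pinfty.
  + by move=> x _; rewrite lee_fin.
  + exact/measurable_EFinP.
  + by move=> x _; rewrite lee_fin.
  + exact/measurable_EFinP.
Qed.

Lemma Fin_scale d (T : measurableType d) (mu : {measure set T -> \bar R}) f (c : R) :
  0 <= c -> Fin mu f -> Fin mu (fun x => c * f x).
Proof.
move=> c0 [mf f0 fi]; split.
- by apply: mfunM => //; exact: measurable_cst.
- by move=> x; rewrite mulr_ge0.
- under eq_integral do rewrite EFinM.
  rewrite ge0_integralZl //.
  + by rewrite lte_mul_pinfty.
  + exact/measurable_EFinP.
  + by move=> x _; rewrite lee_fin.
Qed.

Lemma Fin_le d (T : measurableType d) (mu : {measure set T -> \bar R}) (f g : T -> R) :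
  measurable_fun setT f -> (forall x, 0 <= f x) -> (forall x, f x <= g x) ->
  Fin mu g -> Fin mu f.
Proof.
move=> mf f0 fg [mg g0 gi]; split => //.
apply: le_lt_trans gi; apply: ge0_le_integral => //.
- by move=> x _; rewrite lee_fin.
- exact/measurable_EFinP.
- exact/measurable_EFinP.
- by move=> x _; rewrite lee_fin.
Qed.

Lemma Fin_prod d1 d2 (T1 : measurableType d1) (T2 : measurableType d2)
  (mu : probability T1 R) (nu : probability T2 R) f g :
  Fin mu f -> Fin nu g -> Fin (mu \x nu)%E (fun w => f w.1 * g w.2).
Proof.
move=> [mf f0 fi] [mg g0 gi]; split.
- apply: mfunM.
  + exact: measurableT_comp mf measurable_fst.
  + exact: measurableT_comp mg measurable_snd.
- by move=> x; rewrite mulr_ge0.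
- rewrite (fubini_tonelli1 (fun w => (f w.1 * g w.2)%:E)) /=; last 2 first.
  + apply/measurable_EFinP; apply: mfunM.
    * exact: measurableT_comp mf measurable_fst.
    * exact: measurableT_comp mg measurable_snd.
  + by move=> x; rewrite lee_fin mulr_ge0.
  rewrite /fubini_F /=.
  have -> : (fun x => \int[nu]_y (f x * g y)%:E)%E =
            (fun x => (f x)%:E * \int[nu]_y (g y)%:E)%E.
    apply/funext => x; under eq_integral do rewrite EFinM.
    rewrite ge0_integralZl //.
    + exact/measurable_EFinP.
    + by move=> y _; rewrite lee_fin.
    + by rewrite lee_fin.
  rewrite (_ : (fun x => _) = (fun x => (\int[nu]_y (g y)%:E) * (f x)%:E)%E); last first.
    by apply/funext => x; rewrite muleC.
  rewrite ge0_integralZl //.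
  + have I0 : (0 <= \int[nu]_y (g y)%:E)%E by apply: integral_ge0 => y _; rewrite lee_fin.
    rewrite lte_mul_pinfty //.
    by rewrite ge0_fin_numE.
  + exact/measurable_EFinP.
  + by move=> y _; rewrite lee_fin.
  + by apply: integral_ge0 => y _; rewrite lee_fin.
Qed.

End Fin.

Section FV.
Context (R : realType).

Lemma abs_le_sq (x : R) : `|x| <= 1 + x^+2.
Proof. have h : `|x|^+2 = x^+2 by rewrite real_normK ?num_real. have := sqr_ge0 (`|x| - 1). have := normr_ge0 x. nra. Qed.

Lemma sq_sub_le (x c : R) : (x - c)^+2 <= 2 * x^+2 + 2 * c^+2.
Proof. have h := sqr_ge0 (x + c). nra. Qed.

Lemma fv_of_L2 d (T : measurableType d) (mu : probability T R) (f : T -> R) :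
  measurable_fun setT f -> (\int[mu]_x ((f x) ^+ 2)%:E < +oo)%E ->
  finite_variance mu f.
Proof.
move=> mf fi.
have F2 : Fin mu (fun x => f x ^+ 2).
  split => //; first exact: measurable_funX.
  by move=> x; rewrite sqr_ge0.
split.
- apply/integrableP; split; first exact/measurable_EFinP.
  have [_ _ H] : Fin mu (fun x => `|f x|).
    apply: (@Fin_le _ _ _ _ _ (fun x => 1 + f x ^+ 2)).
    + exact: measurableT_comp.
    + by [].
    + by move=> x; exact: abs_le_sq.
    + by apply: Fin_add => //; exact: Fin_cst.
  apply: le_lt_trans H; apply: ge0_le_integral => //.
  + apply: measurableT_comp => //; exact/measurable_EFinP.
  + apply/measurable_EFinP; exact: measurableT_comp.
- move: (fine (\int[mu]_y (f y)%:E)%E) => c.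
  have [_ _ //] : Fin mu (fun x => (f x - c) ^+ 2).
  apply: (@Fin_le _ _ _ _ _ (fun x => 2 * f x ^+ 2 + 2 * c ^+ 2)).
  + apply: measurable_funX; apply: measurable_funB => //; exact: measurable_cst.
  + by move=> x; rewrite sqr_ge0.
  + by move=> x; exact: sq_sub_le.
  + apply: Fin_add; first exact: Fin_scale.
    by apply: Fin_cst; rewrite mulr_ge0 // sqr_ge0.
Qed.

End FV.


Section RealBounds.
Context (R : realType).

Definition sq n (v : 'rV[R]_n) : R := \sum_(i < n) v ord0 i ^+ 2.

Lemma sq_ge0 n (v : 'rV[R]_n) : 0 <= sq v.
Proof. by apply: sumr_ge0 => i _; rewrite sqr_ge0. Qed.

Lemma sq_subr n (u v : 'rV[R]_n) : sq (u - v) <= 2 * sq u + 2 * sq v.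
Proof.
rewrite /sq !mulr_sumr -big_split /=; apply: ler_sum => i _.
by rewrite !mxE; exact: sq_sub_le.
Qed.

Lemma sqrt_le (s y : R) : 0 <= y -> s <= y ^+ 2 -> Num.sqrt s <= y.
Proof.
move=> y0 sy; have := ler_wsqrtr sy; rewrite sqrtr_sqr ger0_norm //.
Qed.

Lemma le1 (x p : R) : 0 <= x -> 1 <= p -> x <= (1 + x) * p.
Proof. move=> x0 p1; have : 0 <= x * (p - 1) by rewrite mulr_ge0 // subr_ge0. nra. Qed.

Lemma ge1 (x : R) : 0 <= x -> 1 <= 1 + x.
Proof. by move=> x0; rewrite lerDl. Qed.

Lemma le_prod4 (a b c e : R) : 0 <= a -> 0 <= b -> 0 <= c -> 0 <= e ->
  [/\ a <= (1 + a) * (1 + b) * (1 + c) * (1 + e),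
      b <= (1 + a) * (1 + b) * (1 + c) * (1 + e),
      c <= (1 + a) * (1 + b) * (1 + c) * (1 + e) &
      e <= (1 + a) * (1 + b) * (1 + c) * (1 + e)].
Proof.
move=> a0 b0 c0 e0.
have m3 : forall x y z : R, 0 <= x -> 0 <= y -> 0 <= z -> 1 <= (1 + x) * (1 + y) * (1 + z).
  by move=> x y z x0 y0 z0; rewrite !mulr_ege1 // ge1.
split.
- rewrite (_ : _ * _ = (1 + a) * ((1 + b) * (1 + c) * (1 + e))); last by ring.
  by apply: le1 => //; exact: m3.
- rewrite (_ : _ * _ = (1 + b) * ((1 + a) * (1 + c) * (1 + e))); last by ring.
  by apply: le1 => //; exact: m3.
- rewrite (_ : _ * _ = (1 + c) * ((1 + a) * (1 + b) * (1 + e))); last by ring.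
  by apply: le1 => //; exact: m3.
- rewrite (_ : _ * _ = (1 + e) * ((1 + a) * (1 + b) * (1 + c))); last by ring.
  by apply: le1 => //; exact: m3.
Qed.

Definition h4e (a b : 'I_4 -> 'I_4 -> R) : R :=
  4^-1 * (\sum_(i < 4) \sum_(j < 4 | i != j) a i j * b i j)
  - 4^-1 * (\sum_(i < 4) ((\sum_(j < 4 | j != i) a i j) * (\sum_(j < 4 | j != i) b i j)))
  + 24^-1 * ((\sum_(i < 4) \sum_(j < 4 | i != j) a i j)
             * (\sum_(i < 4) \sum_(j < 4 | i != j) b i j)).

Lemma h4E p q (X : 'I_4 -> 'rV[R]_p) (Y : 'I_4 -> 'rV[R]_q) :
  h4 X Y = h4e (fun i j => eucl (X i - X j)) (fun i j => eucl (Y i - Y j)).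
Proof. by []. Qed.

Lemma sum_bnd (P : pred 'I_4) (f : 'I_4 -> R) A :
  (forall j, 0 <= f j <= A) -> 0 <= \sum_(j < 4 | P j) f j <= 4 * A.
Proof.
move=> fA; have A0 : 0 <= A by have /andP[h1 h2] := fA ord0; exact: le_trans h2.
apply/andP; split.
  by apply: sumr_ge0 => j _; have /andP[] := fA j.
rewrite big_mkcond /=.
apply: le_trans (_ : \sum_(j < 4) A <= _).
  apply: ler_sum => j _; case: (P j) => //; by have /andP[] := fA j.
by rewrite sumr_const card_ord mulr_natl.
Qed.

Lemma sum_bnd' (f : 'I_4 -> R) A :
  (forall j, 0 <= f j <= A) -> 0 <= \sum_(j < 4) f j <= 4 * A.
Proof. by move=> h; have := @sum_bnd xpredT f A h. Qed.

Lemma mul_bnd (x y A B : R) : 0 <= x <= A -> 0 <= y <= B -> 0 <= x * y <= A * B.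
Proof.
move=> /andP[x0 xA] /andP[y0 yB]; apply/andP; split; first exact: mulr_ge0.
exact: ler_pM.
Qed.

Lemma lin_bnd (s1 s2 s3 K : R) : 0 <= K -> 0 <= s1 <= 16 * K ->
  0 <= s2 <= 64 * K -> 0 <= s3 <= 256 * K ->
  `|4^-1 * s1 - 4^-1 * s2 + 24^-1 * s3| <= 32 * K.
Proof.
move=> K0 /andP[? ?] /andP[? ?] /andP[? ?].
rewrite ler_norml; apply/andP; split; lra.
Qed.

Lemma h4e_bnd (a b : 'I_4 -> 'I_4 -> R) A B :
  (forall i j, 0 <= a i j <= A) -> (forall i j, 0 <= b i j <= B) ->
  `|h4e a b| <= 32 * (A * B).
Proof.
move=> ha hb.
have S1 : 0 <= \sum_(i < 4) \sum_(j < 4 | i != j) a i j * b i j <= 4 * (4 * (A * B)).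
  apply: sum_bnd' => i; apply: sum_bnd => j; exact: mul_bnd.
have S2 : 0 <= \sum_(i < 4) ((\sum_(j < 4 | j != i) a i j) * (\sum_(j < 4 | j != i) b i j))
            <= 4 * ((4 * A) * (4 * B)).
  apply: sum_bnd' => i; apply: mul_bnd; apply: sum_bnd => j //.
have S3 : 0 <= (\sum_(i < 4) \sum_(j < 4 | i != j) a i j)
             * (\sum_(i < 4) \sum_(j < 4 | i != j) b i j) <= (4 * (4 * A)) * (4 * (4 * B)).
  apply: mul_bnd; apply: sum_bnd' => i; apply: sum_bnd => j //.
have AB0 : 0 <= A * B.
  have /andP[h1 h2] := ha ord0 ord0; have /andP[h3 h4] := hb ord0 ord0.
  by rewrite mulr_ge0 // (le_trans h1 h2, le_trans h3 h4).
rewrite /h4e; apply: lin_bnd => //.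
- by move: S1; rewrite (_ : 4 * (4 * (A * B)) = 16 * (A * B)) //; ring.
- by move: S2; rewrite (_ : 4 * (4 * A * (4 * B)) = 64 * (A * B)) //; ring.
- by move: S3; rewrite (_ : 4 * (4 * A) * (4 * (4 * B)) = 256 * (A * B)) //; ring.
Qed.

End RealBounds.


Section H4bound.
Context (R : realType).

Lemma eucl_bnd n (Z : 'I_4 -> 'rV[R]_n) (M : R) :
  (forall i, sq (Z i) <= M) -> forall i j, 0 <= eucl (Z i - Z j) <= 2 * Num.sqrt M.
Proof.
move=> hM i j; apply/andP; split; first exact: sqrtr_ge0.
apply: sqrt_le; first by rewrite mulr_ge0 // sqrtr_ge0.
have M0 : 0 <= M by apply: le_trans (hM i); exact: sq_ge0.
rewrite exprMn sqr_sqrtr //.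
apply: le_trans (sq_subr _ _) _.
have := hM i; have := hM j; lra.
Qed.

Definition PP n (T : Type) (Z : T -> 'rV[R]_n) t1 t2 t3 t4 :=
  (1 + sq (Z t1)) * (1 + sq (Z t2)) * (1 + sq (Z t3)) * (1 + sq (Z t4)).

Lemma sq_pt4 n (T : Type) (Z : T -> 'rV[R]_n) t1 t2 t3 t4 i :
  sq (Z (pt4 t1 t2 t3 t4 i)) <= PP Z t1 t2 t3 t4.
Proof.
have [h1 h2 h3 h4] := le_prod4 (sq_ge0 (Z t1)) (sq_ge0 (Z t2)) (sq_ge0 (Z t3)) (sq_ge0 (Z t4)).
by case: i => [[|[|[|k]]] ?] /=.
Qed.

Lemma PP_ge0 n (T : Type) (Z : T -> 'rV[R]_n) t1 t2 t3 t4 : 0 <= PP Z t1 t2 t3 t4.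
Proof. by rewrite /PP !mulr_ge0 // addr_ge0 // sq_ge0. Qed.

Lemma h4_bnd p q (T : Type) (X : T -> 'rV[R]_p) (Y : T -> 'rV[R]_q) t1 t2 t3 t4 :
  `|h4 (fun i => X (pt4 t1 t2 t3 t4 i)) (fun i => Y (pt4 t1 t2 t3 t4 i))|
   <= 128 * (Num.sqrt ((1 + sq (X t1)) * (1 + sq (Y t1)))
          * Num.sqrt ((1 + sq (X t2)) * (1 + sq (Y t2)))
          * Num.sqrt ((1 + sq (X t3)) * (1 + sq (Y t3)))
          * Num.sqrt ((1 + sq (X t4)) * (1 + sq (Y t4)))).
Proof.
rewrite h4E.
apply: le_trans.
  apply: h4e_bnd; apply: eucl_bnd; exact: sq_pt4.
have s0 : forall x : R, 0 <= 1 + x -> True by [].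
rewrite -!sqrtrM ?mulr_ge0 ?addr_ge0 ?sq_ge0 ?PP_ge0 //.
rewrite (_ : 32 * (2 * _ * (2 * _)) = 128 * (Num.sqrt (PP X t1 t2 t3 t4) * Num.sqrt (PP Y t1 t2 t3 t4))); last by ring.
rewrite -sqrtrM ?PP_ge0 // /PP.
apply: ler_pM => //.
rewrite le_eqVlt; apply/orP; left; apply/eqP; congr Num.sqrt; ring.
Qed.

End H4bound.


Section Meas.
Context (R : realType).

Lemma msqrt : measurable_fun setT (@Num.sqrt R).
Proof. apply: continuous_measurable_fun; exact: sqrt_continuous. Qed.

Lemma mfine_int d1 d2 (T1 : measurableType d1) (T2 : measurableType d2)
  (m2 : probability T2 R) (f : T1 * T2 -> R) :
  measurable_fun setT f ->
  measurable_fun setT (fun x => fine (\int[m2]_y (f (x, y))%:E)%E).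
Proof.
move=> mf.
have mEf : measurable_fun setT (EFin \o f) by exact/measurable_EFinP.
have E : (fun x => \int[m2]_y (f (x, y))%:E)%E =
   ((fun x => \int[m2]_y ((EFin \o f)^\+ (x, y)))
    \- (fun x => \int[m2]_y ((EFin \o f)^\- (x, y))))%E.
  apply/funext => x; rewrite [LHS]integralE /=.
  by congr (_ - _)%E; apply: eq_integral => y _; rewrite !(funeposE, funenegE).
apply: (measurableT_comp (fine_measurable _)) => //.
rewrite E; apply: emeasurable_funB.
- have := @measurable_fun_fubini_tonelli_F _ _ _ _ _ m2 ((EFin \o f)^\+)%E.
  apply; [exact: measurable_funepos | by move=> z; exact: funepos_ge0].
- have := @measurable_fun_fubini_tonelli_F _ _ _ _ _ m2 ((EFin \o f)^\-)%E.
  apply; [exact: measurable_funeneg | by move=> z; exact: funeneg_ge0].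
Qed.

Lemma msum4 d (W : measurableType d) (P : pred 'I_4) (F : 'I_4 -> W -> R) :
  (forall j, measurable_fun setT (F j)) ->
  measurable_fun setT (fun x => \sum_(j < 4 | P j) F j x).
Proof.
move=> mF.
rewrite (_ : (fun x => _) = fun x => \sum_(j < 4) (if P j then F j x else 0)).
  apply: measurable_sum => j; case: (P j) => //; exact: measurable_cst.
by apply/funext => x; rewrite big_mkcond.
Qed.

Lemma mh4e d (W : measurableType d) (a b : 'I_4 -> 'I_4 -> W -> R) :
  (forall i j, measurable_fun setT (a i j)) -> (forall i j, measurable_fun setT (b i j)) ->
  measurable_fun setT (fun w => h4e (fun i j => a i j w) (fun i j => b i j w)).
Proof.
move=> ma mb; rewrite /h4e.
apply: measurable_funD; first apply: measurable_funB.
- apply: measurable_funM; first exact: measurable_cst.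
  apply: msum4 => i; apply: msum4 => j; exact: measurable_funM.
- apply: measurable_funM; first exact: measurable_cst.
  apply: msum4 => i; apply: measurable_funM; apply: msum4 => j //.
- apply: measurable_funM; first exact: measurable_cst.
  by apply: measurable_funM; apply: msum4 => i; apply: msum4 => j.
Qed.

Lemma msq d (W : measurableType d) n (Z : W -> 'rV[R]_n) :
  (forall k, measurable_fun setT (fun w => Z w ord0 k)) ->
  measurable_fun setT (fun w => sq (Z w)).
Proof.
move=> mZ; rewrite /sq; apply: measurable_sum => k; exact: measurable_funX.
Qed.

Lemma meucl d (W : measurableType d) n (Z1 Z2 : W -> 'rV[R]_n) :
  (forall k, measurable_fun setT (fun w => Z1 w ord0 k)) ->
  (forall k, measurable_fun setT (fun w => Z2 w ord0 k)) ->
  measurable_fun setT (fun w => eucl (Z1 w - Z2 w)).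
Proof.
move=> m1 m2; apply: (measurableT_comp msqrt).
apply: (msq (Z := fun w => Z1 w - Z2 w)) => k.
rewrite (_ : (fun w => _) = fun w => Z1 w ord0 k - Z2 w ord0 k).
  exact: measurable_funB.
by apply/funext => w; rewrite !mxE.
Qed.

Lemma mh4 d (W : measurableType d) d' (T : measurableType d') p q
  (X : T -> 'rV[R]_p) (Y : T -> 'rV[R]_q)
  (mX : forall i : 'I_p, measurable_fun setT (fun t => X t ord0 i))
  (mY : forall j : 'I_q, measurable_fun setT (fun t => Y t ord0 j))
  (f1 f2 f3 f4 : W -> T) :
  measurable_fun setT f1 -> measurable_fun setT f2 ->
  measurable_fun setT f3 -> measurable_fun setT f4 ->
  measurable_fun setT (fun w =>
    h4 (fun i => X (pt4 (f1 w) (f2 w) (f3 w) (f4 w) i))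
       (fun i => Y (pt4 (f1 w) (f2 w) (f3 w) (f4 w) i))).
Proof.
move=> m1 m2 m3 m4.
have mpt : forall i, measurable_fun setT (fun w => pt4 (f1 w) (f2 w) (f3 w) (f4 w) i).
  by case=> [[|[|[|k]]] ?].
pose a := fun i j w => eucl (X (pt4 (f1 w) (f2 w) (f3 w) (f4 w) i) - X (pt4 (f1 w) (f2 w) (f3 w) (f4 w) j)).
pose b := fun i j w => eucl (Y (pt4 (f1 w) (f2 w) (f3 w) (f4 w) i) - Y (pt4 (f1 w) (f2 w) (f3 w) (f4 w) j)).
have := @mh4e _ W a b.
apply.
- move=> i j; apply: meucl => k.
  + exact: (measurableT_comp (mX k) (mpt i)).
  + exact: (measurableT_comp (mX k) (mpt j)).
- move=> i j; apply: meucl => k.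
  + exact: (measurableT_comp (mY k) (mpt i)).
  + exact: (measurableT_comp (mY k) (mpt j)).
Qed.

End Meas.


Section IntBnd.
Context (R : realType).

Lemma fine_abs_le (e : \bar R) (K : R) : 0 <= K -> (`|e| <= K%:E)%E -> `|fine e| <= K.
Proof. by move=> K0; case: e => [r| |] //=; rewrite ?lee_fin // normr0. Qed.

Lemma Fin_fineK d (W : measurableType d) (mu : {measure set W -> \bar R}) (g : W -> R) :
  Fin mu g -> (fine (\int[mu]_w (g w)%:E))%:E = (\int[mu]_w (g w)%:E)%E.
Proof.
move=> [_ g0 gi]; rewrite fineK // ge0_fin_numE //.
by apply: integral_ge0 => w _; rewrite lee_fin.
Qed.

Lemma int_bnd d (W : measurableType d) (mu : {measure set W -> \bar R}) (f g : W -> R) (c : R) :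
  measurable_fun setT f -> 0 <= c -> Fin mu g -> (forall w, `|f w| <= c * g w) ->
  `|fine (\int[mu]_w (f w)%:E)%E| <= c * fine (\int[mu]_w (g w)%:E)%E.
Proof.
move=> mf c0 Fg fg; have [mg g0 gi] := Fg.
apply: fine_abs_le; first by rewrite mulr_ge0 // fine_ge0 // integral_ge0 // => w _; rewrite lee_fin.
apply: le_trans (le_abse_integral _ _ _) _ => //; first exact/measurable_EFinP.
rewrite EFinM Fin_fineK // -ge0_integralZl_EFin //; first last.
  exact/measurable_EFinP.
  by move=> w _; rewrite lee_fin.
apply: ge0_le_integral => //.
- apply: measurableT_comp => //; exact/measurable_EFinP.
- by apply/measurable_EFinP; apply: measurable_funM => //; exact: measurable_cst.
- by move=> w _ /=; rewrite -EFinM lee_fin.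
Qed.

Lemma sq_le_of_abs (x y : R) : `|x| <= y -> x ^+ 2 <= y ^+ 2.
Proof.
move=> h; have y0 : 0 <= y by exact: le_trans h.
rewrite -real_normK ?num_real // !expr2; apply: ler_pM => //.
Qed.

End IntBnd.


Section Main.
Context (R : realType) (d : measure_display) (T : measurableType d)
  (P : probability T R) (p q : nat) (X : T -> 'rV[R]_p) (Y : T -> 'rV[R]_q)
  (mX : forall i : 'I_p, measurable_fun setT (fun t => X t ord0 i))
  (mY : forall j : 'I_q, measurable_fun setT (fun t => Y t ord0 j))
  (hX : (\int[P]_t ((eucl (X t)) ^+ 2)%:E < +oo)%E)
  (hY : (\int[P]_t ((eucl (Y t)) ^+ 2)%:E < +oo)%E)
  (hXY : (\int[P]_t ((eucl (X t)) ^+ 2 * (eucl (Y t)) ^+ 2)%:E < +oo)%E).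

Let Dfun (t : T) : R := (1 + sq (X t)) * (1 + sq (Y t)).
Let Sfun (t : T) : R := Num.sqrt (Dfun t).

Let eucl2 n (v : 'rV[R]_n) : eucl v ^+ 2 = sq v.
Proof. exact: sqr_sqrtr (sq_ge0 v). Qed.

Let mSX : measurable_fun setT (fun t => sq (X t)). Proof. exact: msq. Qed.
Let mSY : measurable_fun setT (fun t => sq (Y t)). Proof. exact: msq. Qed.

Let mD : measurable_fun setT Dfun.
Proof.
apply: measurable_funM; apply: measurable_funD => //; exact: measurable_cst.
Qed.

Let D1 t : 1 <= Dfun t.
Proof. by rewrite /Dfun mulr_ege1 // ge1 // sq_ge0. Qed.

Let SD t : Sfun t ^+ 2 = Dfun t.
Proof. by rewrite /Sfun sqr_sqrtr // (le_trans ler01 (D1 t)). Qed.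

Let S0 t : 0 <= Sfun t.
Proof. exact: sqrtr_ge0. Qed.

Let FinD : Fin P Dfun.
Proof.
have FX : Fin P (fun t => sq (X t)).
  split => //; first by move=> t; exact: sq_ge0.
  apply: le_lt_trans hX; rewrite le_eqVlt; apply/orP; left; apply/eqP; apply: eq_integral => t _; by rewrite eucl2.
have FY : Fin P (fun t => sq (Y t)).
  split => //; first by move=> t; exact: sq_ge0.
  apply: le_lt_trans hY; rewrite le_eqVlt; apply/orP; left; apply/eqP; apply: eq_integral => t _; by rewrite eucl2.
have FXY : Fin P (fun t => sq (X t) * sq (Y t)).
  split => //; first exact: measurable_funM.
    by move=> t; rewrite mulr_ge0 // sq_ge0.
  apply: le_lt_trans hXY; rewrite le_eqVlt; apply/orP; left; apply/eqP; apply: eq_integral => t _; by rewrite !eucl2.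
apply: (@Fin_le _ _ _ _ _ (fun t => 1 + sq (X t) + sq (Y t) + sq (X t) * sq (Y t))) => //.
- by move=> t; exact: le_trans ler01 (D1 t).
- by move=> t; rewrite /Dfun le_eqVlt; apply/orP; left; apply/eqP; ring.
- apply: Fin_add => //; apply: Fin_add => //; apply: Fin_add => //.
  exact: Fin_cst.
Qed.

Let FinS : Fin P Sfun.
Proof.
apply: (@Fin_le _ _ _ _ _ Dfun) => //.
- rewrite /Sfun; apply: measurableT_comp; [exact: msqrt | exact: mD].
- move=> t; apply: sqrt_le; first exact: le_trans ler01 (D1 t).
  have := D1 t; rewrite expr2; move=> h; rewrite ler_peMr //; exact: le_trans ler01 h.
Qed.

Let FinS3 : Fin (P \x P \x P)%E (fun w => Sfun w.1.1 * Sfun w.1.2 * Sfun w.2).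
Proof. exact: Fin_prod (Fin_prod FinS FinS) FinS. Qed.

Let FinS2 : Fin (P \x P)%E (fun w => Sfun w.1 * Sfun w.2).
Proof. exact: Fin_prod FinS FinS. Qed.

Let h4b t1 t2 t3 t4 :
  `|h4 (fun i => X (pt4 t1 t2 t3 t4 i)) (fun i => Y (pt4 t1 t2 t3 t4 i))|
   <= 128 * (Sfun t1 * Sfun t2 * Sfun t3 * Sfun t4).
Proof. exact: h4_bnd. Qed.

Lemma partA : finite_variance (P \x P \x P \x P)%E (H4 X Y).
Proof.
apply: fv_of_L2.
- rewrite /H4.
  apply: (mh4 mX mY (f1 := fun w : T * T * T * T => w.1.1.1) (f2 := fun w => w.1.1.2)
          (f3 := fun w => w.1.2) (f4 := fun w => w.2)).
  + exact: measurableT_comp measurable_fst (measurableT_comp measurable_fst measurable_fst).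
  + exact: measurableT_comp measurable_snd (measurableT_comp measurable_fst measurable_fst).
  + exact: measurableT_comp measurable_snd measurable_fst.
  + exact: measurable_snd.
- have F4 : Fin (P \x P \x P \x P)%E
     (fun w => 128 ^+ 2 * (Dfun w.1.1.1 * Dfun w.1.1.2 * Dfun w.1.2 * Dfun w.2)).
    apply: Fin_scale; first by rewrite sqr_ge0.
    exact: Fin_prod (Fin_prod (Fin_prod FinD FinD) FinD) FinD.
  have [_ _ //] : Fin (P \x P \x P \x P)%E (fun w => H4 X Y w ^+ 2).
  apply: Fin_le F4.
  + apply: measurable_funX; rewrite /H4.
    apply: (mh4 mX mY (f1 := fun w : T * T * T * T => w.1.1.1) (f2 := fun w => w.1.1.2)
          (f3 := fun w => w.1.2) (f4 := fun w => w.2)).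
    * exact: measurableT_comp measurable_fst (measurableT_comp measurable_fst measurable_fst).
    * exact: measurableT_comp measurable_snd (measurableT_comp measurable_fst measurable_fst).
    * exact: measurableT_comp measurable_snd measurable_fst.
    * exact: measurable_snd.
  + by move=> w; rewrite sqr_ge0.
  + move=> w; have := sq_le_of_abs (h4b w.1.1.1 w.1.1.2 w.1.2 w.2).
    by rewrite !exprMn !SD.
Qed.

Lemma partB : finite_variance P (H1 P X Y).
Proof.
pose F := fun z : T * (T * T * T) => H4 X Y (z.1, z.2.1.1, z.2.1.2, z.2.2).
have mF : measurable_fun setT F.
  rewrite /F /H4.
  apply: (mh4 mX mY (f1 := fun z : T * (T * T * T) => z.1) (f2 := fun z => z.2.1.1)
          (f3 := fun z => z.2.1.2) (f4 := fun z => z.2.2)).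
  + exact: measurable_fst.
  + exact: measurableT_comp measurable_fst (measurableT_comp measurable_fst measurable_snd).
  + exact: measurableT_comp measurable_snd (measurableT_comp measurable_fst measurable_snd).
  + exact: measurableT_comp measurable_snd measurable_snd.
have mH1 : measurable_fun setT (H1 P X Y).
  exact: (mfine_int (P \x P \x P)%E mF).
set M := fine (\int[(P \x P \x P)%E]_w (Sfun w.1.1 * Sfun w.1.2 * Sfun w.2)%:E)%E.
have M0 : 0 <= M.
  by rewrite fine_ge0 // integral_ge0 // => w _; rewrite lee_fin !mulr_ge0.
have bnd t1 : `|H1 P X Y t1| <= (128 * Sfun t1) * M.
  rewrite /H1; apply: int_bnd => //.
  - rewrite /H4.
    apply: (mh4 mX mY (f1 := fun w : T * T * T => t1) (f2 := fun w => w.1.1)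
          (f3 := fun w => w.1.2) (f4 := fun w => w.2)).
    + exact: measurable_cst.
    + exact: measurableT_comp measurable_fst measurable_fst.
    + exact: measurableT_comp measurable_snd measurable_fst.
    + exact: measurable_snd.
  - by rewrite mulr_ge0.
  - move=> w; apply: le_trans (h4b t1 w.1.1 w.1.2 w.2) _.
    by rewrite !mulrA.
apply: fv_of_L2 => //.
have FD : Fin P (fun t => (128 ^+ 2 * M ^+ 2) * Dfun t).
  by apply: Fin_scale => //; rewrite mulr_ge0 // sqr_ge0.
have [_ _ //] : Fin P (fun t => H1 P X Y t ^+ 2).
apply: Fin_le FD.
- exact: measurable_funX.
- by move=> t; rewrite sqr_ge0.
- move=> t; have := sq_le_of_abs (bnd t).
  by rewrite !exprMn SD mulrAC.
Qed.

Lemma partC : finite_variance (P \x P)%E (H2 P X Y).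
Proof.
pose F := fun z : (T * T) * (T * T) => H4 X Y (z.1.1, z.1.2, z.2.1, z.2.2).
have mF : measurable_fun setT F.
  rewrite /F /H4.
  apply: (mh4 mX mY (f1 := fun z : (T * T) * (T * T) => z.1.1) (f2 := fun z => z.1.2)
          (f3 := fun z => z.2.1) (f4 := fun z => z.2.2)).
  + exact: measurableT_comp measurable_fst measurable_fst.
  + exact: measurableT_comp measurable_snd measurable_fst.
  + exact: measurableT_comp measurable_fst measurable_snd.
  + exact: measurableT_comp measurable_snd measurable_snd.
have mH2 : measurable_fun setT (H2 P X Y).
  exact: (mfine_int (P \x P)%E mF).
set M := fine (\int[(P \x P)%E]_w (Sfun w.1 * Sfun w.2)%:E)%E.
have M0 : 0 <= M.
  by rewrite fine_ge0 // integral_ge0 // => w _; rewrite lee_fin !mulr_ge0.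
have bnd t : `|H2 P X Y t| <= (128 * (Sfun t.1 * Sfun t.2)) * M.
  rewrite /H2; apply: int_bnd => //.
  - rewrite /H4.
    apply: (mh4 mX mY (f1 := fun w : T * T => t.1) (f2 := fun w => t.2)
          (f3 := fun w => w.1) (f4 := fun w => w.2)).
    + exact: measurable_cst.
    + exact: measurable_cst.
    + exact: measurable_fst.
    + exact: measurable_snd.
  - by rewrite !mulr_ge0.
  - move=> w; apply: le_trans (h4b t.1 t.2 w.1 w.2) _.
    by rewrite !mulrA.
apply: fv_of_L2 => //.
have FD : Fin (P \x P)%E (fun t => (128 ^+ 2 * M ^+ 2) * (Dfun t.1 * Dfun t.2)).
  by apply: Fin_scale; [rewrite mulr_ge0 // sqr_ge0 | exact: Fin_prod FinD FinD].
have [_ _ //] : Fin (P \x P)%E (fun t => H2 P X Y t ^+ 2).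
apply: Fin_le FD.
- exact: measurable_funX.
- by move=> t; rewrite sqr_ge0.
- move=> t; have := sq_le_of_abs (bnd t).
  by rewrite !exprMn !SD; move=> h; apply: le_trans h _; rewrite le_eqVlt; apply/orP; left; apply/eqP; ring.
Qed.

End Main.


Unset Implicit Arguments.
Set Strict Implicit.

Theorem lemma4p8 (R : realType) (d : measure_display) (T : measurableType d)
  (P : probability T R) (p q : nat) (X : T -> 'rV[R]_p) (Y : T -> 'rV[R]_q)
  (mX : forall i : 'I_p, measurable_fun setT (fun t => X t ord0 i))
  (mY : forall j : 'I_q, measurable_fun setT (fun t => Y t ord0 j))
  (hX : (\int[P]_t ((eucl (X t)) ^+ 2)%:E < +oo)%E)
  (hY : (\int[P]_t ((eucl (Y t)) ^+ 2)%:E < +oo)%E)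
  (hXY : (\int[P]_t ((eucl (X t)) ^+ 2 * (eucl (Y t)) ^+ 2)%:E < +oo)%E) :
  finite_variance (P \x P \x P \x P)%E (H4 X Y) /\
  finite_variance P (H1 P X Y) /\
  finite_variance (P \x P)%E (H2 P X Y).
Proof.
split; first by apply: partA.
split; first by apply: partB.
by apply: partC.
Qed.
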